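(* Let $a<b$ be real numbers and let $d\geq 2$ be an integer. Then there exists an alphabet $\mathcal{A}\subset\mathbb{R}$ with $|\mathcal{A}|=2^d$ such that for every $N$ and every $y\in[a,b]^{N\times N}$, the matrices $q,u\in\mathbb{R}^{N\times N}$ generated by the two-dimensional first-order $\Sigma\Delta$ recursion with alphabet $\mathcal{A}$ satisfy: (i) $\|u\|_{\max}\leq C$ with $C=\frac{b-a}{2(2^d-3)}$; (ii) $u_{i,j}=u_{i,j-1}+u_{i-1,j}-u_{i-1,j-1}+y_{i,j}-q_{i,j}$ for all $i,j$ (with $u_{i,0}=u_{0,j}=u_{0,0}=0$), i.e. $DuD^T=y-q$; (iii) each $q_{i,j}$ depends only on $\{y_{i',j'}: i'\leq i,\ j'\leq j\}$.
   Context: For a finite alphabet $\mathcal{A}\subset\mathbb{R}$, $Q_{\mathcal{A}}(z)$ denotes an element of $\mathcal{A}$ nearest to $z$. The two-dimensional first-order $\Sigma\Delta$ recursion: given $y\in\mathbb{R}^{N\times N}$, set $u_{i,0}=u_{0,j}=u_{0,0}=0$ and for $i,j\ge 1$ (in an order such that all indices $(i',j')$ with $i'\le i$, $j'\le j$, $(i',j')\neq(i,j)$ are computed first) define $q_{i,j}=Q_{\mathcal{A}}(u_{i,j-1}+u_{i-1,j}-u_{i-1,j-1}+y_{i,j})$ and $u_{i,j}=u_{i,j-1}+u_{i-1,j}-u_{i-1,j-1}+y_{i,j}-q_{i,j}$ (for the first row and column this reduces to the one-dimensional first-order scheme). $D$ is the $N\times N$ matrix with $1$ on the diagonal, $-1$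 on the subdiagonal and $0$ elsewhere. $\|u\|_{\max}=\max_{i,j}|u_{i,j}|$. *)

(* Defs.v *)
From HB Require Import structures.
From mathcomp Require Import all_boot all_order all_algebra.
From mathcomp Require Import reals.
Set Implicit Arguments. Unset Strict Implicit. Unset Printing Implicit Defensive.
Import Order.TTheory GRing.Theory Num.Theory.
Local Open Scope ring_scope.

(* Q : R -> R is a nearest-element quantizer onto the alphabet A
   (any tie-breaking rule is allowed). *)
Definition nearest_quantizer (R : realType) (A : seq R) (Q : R -> R) : Prop :=
  forall z : R, Q z \in A /\ (forall x, x \in A -> `|z - Q z| <= `|z - x|).

(* One row of the 2D first-order Sigma-Delta recursion (1-based indices,
   u_{i,0} = 0).  prev = row i-1 of u, yrow = row i of y. *)
Definition sd_row (R : realType) (Q : R -> R) (prev yrow : nat -> R) : nat -> R :=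
  fix f (j : nat) : R :=
    match j with
    | 0 => 0
    | j'.+1 => let v := f j' + prev j'.+1 - prev j' + yrow j'.+1 in v - Q v
    end.

(* u_{i,j} for all i, j (with u_{0,j} = u_{i,0} = 0), input y indexed from 1. *)
Fixpoint sd_u_nat (R : realType) (Q : R -> R) (y : nat -> nat -> R) (i : nat)
  : nat -> R :=
  match i with
  | 0 => fun _ => 0
  | i'.+1 => sd_row Q (sd_u_nat Q y i') (y i'.+1)
  end.

Definition sd_q_nat (R : realType) (Q : R -> R) (y : nat -> nat -> R) (i j : nat) : R :=
  match i, j with
  | i'.+1, j'.+1 =>
      Q (sd_u_nat Q y i j' + sd_u_nat Q y i' j - sd_u_nat Q y i' j' + y i j)
  | _, _ => 0
  end.

(* 1-based extension of an N x N matrix (zero outside 1..N). *)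
Definition mx_ext (R : realType) (N : nat) (y : 'M[R]_N) (i j : nat) : R :=
  match (insub i.-1 : option 'I_N), (insub j.-1 : option 'I_N) with
  | Some i', Some j' => if (0 < i)%N && (0 < j)%N then y i' j' else 0
  | _, _ => 0
  end.

(* The matrices u and q produced by the recursion; entry (i,j) of the
   MathComp matrix (0-based) is entry (i+1,j+1) of the paper. *)
Definition sd_u (R : realType) (N : nat) (Q : R -> R) (y : 'M[R]_N) : 'M[R]_N :=
  \matrix_(i < N, j < N) sd_u_nat Q (mx_ext y) i.+1 j.+1.

Definition sd_q (R : realType) (N : nat) (Q : R -> R) (y : 'M[R]_N) : 'M[R]_N :=
  \matrix_(i < N, j < N) sd_q_nat Q (mx_ext y) i.+1 j.+1.

Definition Dmx (R : realType) (N : nat) : 'M[R]_N :=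
  \matrix_(i < N, j < N)
    (if i == j then 1 else if (i : nat) == j.+1 then -1 else 0).

(* Main.v *)
Require Import Defs.
From HB Require Import structures.
From mathcomp Require Import all_boot all_order all_algebra.
From mathcomp Require Import reals.
From mathcomp Require Import ring lra zify.
Import Order.TTheory GRing.Theory Num.Theory.
Local Open Scope ring_scope.
Set Implicit Arguments.

Lemma sd_u_nat_0 (R : realType) (Q : R -> R) y i : sd_u_nat Q y i 0 = 0.
Proof. by case: i. Qed.

Lemma sd_u_nat_SS (R : realType) (Q : R -> R) y i j :
  sd_u_nat Q y i.+1 j.+1 =
  (sd_u_nat Q y i.+1 j + sd_u_nat Q y i j.+1 - sd_u_nat Q y i j + y i.+1 j.+1) -
  Q (sd_u_nat Q y i.+1 j + sd_u_nat Q y i j.+1 - sd_u_nat Q y i j + y i.+1 j.+1).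
Proof. by []. Qed.

Lemma mx_ext_S (R : realType) N (y : 'M[R]_N) (i j : 'I_N) : mx_ext y i.+1 j.+1 = y i j.
Proof. by rewrite /mx_ext /= !valK. Qed.

Lemma sd_u_causal (R : realType) (Q : R -> R) (Y Y' : nat -> nat -> R) i :
  forall j, (forall i' j', (i' <= i)%N -> (j' <= j)%N -> Y' i' j' = Y i' j') ->
  sd_u_nat Q Y' i j = sd_u_nat Q Y i j.
Proof.
elim: i => [|i IH] j H //.
elim: j H => [|j IHj] H; first by rewrite !sd_u_nat_0.
have H1 : forall i' j', (i' <= i)%N -> (j' <= j.+1)%N -> Y' i' j' = Y i' j'.
  by move=> i' j' hi hj; apply: H => //; apply: leqW.
have H2 : forall i' j', (i' <= i)%N -> (j' <= j)%N -> Y' i' j' = Y i' j'.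
  by move=> i' j' hi hj; apply: H1 => //; apply: leqW.
have H3 : forall i' j', (i' <= i.+1)%N -> (j' <= j)%N -> Y' i' j' = Y i' j'.
  by move=> i' j' hi hj; apply: H => //; apply: leqW.
by rewrite !sd_u_nat_SS (IHj H3) (IH j.+1 H1) (IH j H2) H.
Qed.

Lemma sumD (R : realType) N (i : 'I_N) (g : nat -> R) : g 0%N = 0 ->
  \sum_(k < N) Dmx R N i k * g k.+1 = g i.+1 - g i.
Proof.
move=> g0; rewrite (bigD1 i) //= !mxE eqxx mul1r.
case: i => [[|i'] Hi] /=.
  rewrite big1 ?g0 ?addr0 ?subr0 // => k Hk; rewrite !mxE.
  by rewrite eq_sym (negbTE Hk) /= mul0r.
have Hi' : (i' < N)%N by apply: ltnW.
rewrite (bigD1 (Ordinal Hi')) /=; last first.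
  by rewrite -val_eqE /= neq_ltn ltnSn ?orbT.
rewrite !mxE /= eqxx.
rewrite ifN; last by rewrite -val_eqE /= (gtn_eqF (ltnSn i')).
rewrite big1 ?addr0; first by rewrite mulN1r.
move=> k /andP[Hk1 Hk2]; rewrite !mxE.
rewrite eq_sym (negbTE Hk1); case: ifP; last by rewrite mul0r.
move/eqP=> [e]; move: Hk2; by rewrite -val_eqE /= e eqxx.
Qed.

Lemma sd_q_nat_SS (R : realType) (Q : R -> R) y i j :
  sd_q_nat Q y i.+1 j.+1 =
  Q (sd_u_nat Q y i.+1 j + sd_u_nat Q y i j.+1 - sd_u_nat Q y i j + y i.+1 j.+1).
Proof. by []. Qed.

Lemma sd_q_causal (R : realType) (Q : R -> R) (Y Y' : nat -> nat -> R) i j :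
  (forall i' j', (i' <= i)%N -> (j' <= j)%N -> Y' i' j' = Y i' j') ->
  sd_q_nat Q Y' i j = sd_q_nat Q Y i j.
Proof.
case: i => [|i] //; case: j => [|j] // H; rewrite !sd_q_nat_SS.
have H1 : forall i' j', (i' <= i)%N -> (j' <= j.+1)%N -> Y' i' j' = Y i' j'.
  by move=> i' j' hi hj; apply: H => //; apply: leqW.
have H2 : forall i' j', (i' <= i)%N -> (j' <= j)%N -> Y' i' j' = Y i' j'.
  by move=> i' j' hi hj; apply: H1 => //; apply: leqW.
have H3 : forall i' j', (i' <= i.+1)%N -> (j' <= j)%N -> Y' i' j' = Y i' j'.
  by move=> i' j' hi hj; apply: H => //; apply: leqW.
by rewrite (@sd_u_causal _ Q Y Y' _ _ H3) (@sd_u_causal _ Q Y Y' _ _ H1) (@sd_u_causal _ Q Y Y' _ _ H2) H.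
Qed.

Lemma sd_u_bound (R : realType) (Q : R -> R) (Y : nat -> nat -> R) (a b C : R) (N : nat) :
  0 <= C ->
  (forall v, a - 3*C <= v <= b + 3*C -> `|v - Q v| <= C) ->
  (forall i j, (0 < i <= N)%N -> (0 < j <= N)%N -> a <= Y i j <= b) ->
  forall i j, (i <= N)%N -> (j <= N)%N -> `|sd_u_nat Q Y i j| <= C.
Proof.
move=> C0 HQ HY; elim=> [|i IH] j Hi Hj; first by rewrite normr0.
elim: j Hj => [|j IHj] Hj; first by rewrite sd_u_nat_0 normr0.
rewrite sd_u_nat_SS; apply: HQ.
have h1 := IHj (ltnW Hj).
have h2 := IH j.+1 (ltnW Hi) Hj.
have h3 := IH j (ltnW Hi) (ltnW Hj).
have /andP[h4 h5] := HY i.+1 j.+1 Hi Hj.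
move: h1 h2 h3; rewrite !ler_norml => /andP[? ?] /andP[? ?] /andP[? ?].
apply/andP; split; lra.
Qed.

Lemma cover (R : realType) (c C : R) n v : 0 <= C ->
  c - C <= v <= c + C + 2 * C * n%:R ->
  exists k, (k <= n)%N /\ `|v - (c + 2 * C * k%:R)| <= C.
Proof.
move=> C0; elim: n => [|n IH] /andP[h1 h2].
  exists 0%N; split=> //; rewrite ler_norml; apply/andP; move: h2; rewrite mulr0; split; lra.
case: (lerP v (c + C + 2 * C * n%:R)) => hv.
  have [k [hk hk']] := IH (introT andP (conj h1 hv)).
  by exists k; split=> //; apply: leqW.
exists n.+1; split=> //; rewrite ler_norml; apply/andP; move: h2; rewrite -natr1; split; lra.
Qed.

Lemma DuD (R : realType) N (Q : R -> R) (y : 'M[R]_N) :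
  Dmx R N *m sd_u Q y *m (Dmx R N)^T = y - sd_q Q y.
Proof.
apply/matrixP => i j.
set F := sd_u_nat Q (mx_ext y).
have E1 : forall k : 'I_N, (Dmx R N *m sd_u Q y) i k = F i.+1 k.+1 - F i k.+1.
  have Eu : forall l k : 'I_N, sd_u Q y l k = F l.+1 k.+1 by move=> l k'; rewrite mxE.
  move=> k; rewrite mxE; under eq_bigr => l _ do rewrite Eu.
  exact: (@sumD _ _ i (fun l => F l k.+1) (erefl _)).
rewrite mxE; under eq_bigr => k _ do rewrite E1 [(Dmx R N)^T _ _]mxE mulrC.
rewrite (@sumD _ _ j (fun k => F i.+1 k - F i k)); last by rewrite /F !sd_u_nat_0 subr0.
rewrite !mxE /F sd_u_nat_SS sd_q_nat_SS mx_ext_S.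
ring.
Qed.

Theorem proposition1 (R : realType) (a b : R) (d : nat) :
  a < b -> (2 <= d)%N ->
  exists A : seq R,
    uniq A /\ size A = (2 ^ d)%N /\
    forall Q : R -> R, nearest_quantizer A Q ->
    forall (N : nat) (y : 'M[R]_N),
      (forall i j, a <= y i j <= b) ->
      [/\ (forall i j, `|sd_u Q y i j| <= (b - a) / (2 * ((2 ^ d)%:R - 3))),
          Dmx R N *m sd_u Q y *m (Dmx R N)^T = y - sd_q Q y
        & forall (i j : 'I_N) (y' : 'M[R]_N),
            (forall (i' j' : 'I_N), (i' <= i)%N -> (j' <= j)%N -> y' i' j' = y i' j') ->
            sd_q Q y' i j = sd_q Q y i j].
Proof.
move=> ab d2.
set K := (2 ^ d)%N.
have K4 : (4 <= K)%N by rewrite /K (_ : 4 = 2 ^ 2)%N // leq_exp2l.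
have K3 : 0 < K%:R - 3 :> R by rewrite subr_gt0 (ltr_nat R 3 K).
set C := (b - a) / (2 * (K%:R - 3)).
have C0 : 0 < C by rewrite divr_gt0 ?subr_gt0 // mulr_gt0.
have CE : 2 * C * K%:R = b - a + 6 * C.
  have : 2 * C * (K%:R - 3) = b - a.
    rewrite /C; field; lra.
  lra.
have KE : (K.-1)%:R = K%:R - 1 :> R.
  by rewrite -[in RHS](@prednK K) ?(leq_trans _ K4) // -natr1 addrK.
exists [seq a - 2 * C + 2 * C * k%:R | k <- iota 0 K]; split.
  rewrite map_inj_uniq ?iota_uniq // => k1 k2 /addrI e.
  apply/eqP; rewrite -(eqr_nat R); apply/eqP; apply: (mulfI _ e).
  by rewrite mulf_neq0 // gt_eqF.
split; first by rewrite size_map size_iota.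
move=> Q HQ N y Hy.
have Qerr : forall v, a - 3 * C <= v <= b + 3 * C -> `|v - Q v| <= C.
  move=> v /andP[h1 h2].
  have hv : a - 2 * C - C <= v <= a - 2 * C + C + 2 * C * (K.-1)%:R.
    by rewrite KE; apply/andP; split; lra.
  have [k [hk hv']] := @cover _ _ _ _ _ (ltW C0) hv.
  case: (HQ v) => _ H; apply: le_trans (H _ _) hv'.
  apply/mapP; exists k => //; rewrite mem_iota; lia.
split.
- move=> i j; rewrite mxE; apply: (@sd_u_bound _ _ _ a b C N (ltW C0) Qerr) => //.
  move=> [|i'] [|j'] // hi hj.
  have := @mx_ext_S _ _ y (Ordinal hi) (Ordinal hj); rewrite /= => ->.
  exact: Hy.
- exact: DuD.
- move=> i j y' Hy'; rewrite !mxE; apply: sd_q_causal => i' j' hi hj.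
  rewrite /mx_ext; case: insubP => [i0 _ ei|//]; case: insubP => [j0 _ ej|//].
  case: ifP => // _; apply: Hy'.
    have -> : nat_of_ord i0 = i'.-1 := ei.
    by case: i' hi {ei}.
  have -> : nat_of_ord j0 = j'.-1 := ej.
  by case: j' hj {ej}.
Qed.
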